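(* Let $(p_{ij})_{i,j\in\{0,1\}}$ be a transition matrix with all $p_{ij}\in(0,1)$ and $p_{ij}\ne\tfrac12$ for some $(i,j)$, and for $i\in\{0,1\}$, $n\in\mathbb N_0$ let $I_n^i$ be binomially $B(n,p_{i0})$ distributed. Let $(a_i(n))_{n\in\mathbb N_0}$, $(\varepsilon_i(n))_{n\in\mathbb N_0}$, $i\in\{0,1\}$, be real sequences satisfying $$a_i(n)=p_{i0}\mathbb E[a_0(I_n^i)]+p_{i1}\mathbb E[a_1(n-I_n^i)]+\varepsilon_i(n),\qquad i\in\{0,1\},\ n\in\mathbb N.$$ If $\varepsilon_i(n)=c_i+O(n^{-\alpha})$ for constants $c_i\in\mathbb R$, some $\alpha>0$ and both $i$, then as $n\to\infty$ $$a_i(n)=\frac{\pi_0c_0+\pi_1c_1}{H}\log n+O(1),\qquad i\in\{0,1\}.$$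
   Context: $\pi_0=p_{10}/(p_{01}+p_{10})$, $\pi_1=p_{01}/(p_{01}+p_{10})$, $H_i=-\sum_{j}p_{ij}\log p_{ij}$, $H=\pi_0H_0+\pi_1H_1$. *)

(* Defs.v *)
From Stdlib Require Import Reals Lra.
Open Scope R_scope.

Definition Ebin (n : nat) (q : R) (f : nat -> R) : R :=
  sum_f_R0 (fun k => C n k * q ^ k * (1 - q) ^ (n - k) * f k) n.

(* Stationary distribution of the two-state chain with transition matrix p
   (indices 0,1): pi_0 = p10/(p01+p10), pi_1 = p01/(p01+p10). *)
Definition pi0 (p : nat -> nat -> R) : R := p 1%nat 0%nat / (p 0%nat 1%nat + p 1%nat 0%nat).
Definition pi1 (p : nat -> nat -> R) : R := p 0%nat 1%nat / (p 0%nat 1%nat + p 1%nat 0%nat).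

Definition Hrow (p : nat -> nat -> R) (i : nat) : R :=
  - (p i 0%nat * ln (p i 0%nat) + p i 1%nat * ln (p i 1%nat)).

Definition Hent (p : nat -> nat -> R) : R := pi0 p * Hrow p 0%nat + pi1 p * Hrow p 1%nat.

(* Main.v *)
Require Import Defs.
From Stdlib Require Import Reals Lra Lia Arith Factorial.
Open Scope R_scope.


Lemma C_n_0 n : C n 0 = 1.
Proof. unfold C. rewrite Nat.sub_0_r. simpl Factorial.fact. rewrite Rmult_1_l.
  field. apply INR_fact_neq_0. Qed.

Lemma C_n_n n : C n n = 1.
Proof. unfold C. rewrite Nat.sub_diag. simpl Factorial.fact. rewrite Rmult_1_r.
  field. apply INR_fact_neq_0. Qed.

Lemma C_pos n k : 0 <= C n k.
Proof. unfold C. apply Rmult_le_pos. apply pos_INR.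
  apply Rlt_le, Rinv_0_lt_compat, Rmult_lt_0_compat; apply INR_fact_lt_0. Qed.

Lemma sumC_S n (g : nat -> R) :
  sum_f_R0 (fun k => C (S n) k * g k) (S n) =
  sum_f_R0 (fun k => C n k * (g k + g (S k))) n.
Proof.
  rewrite decomp_sum by lia. simpl pred.
  destruct n as [|m].
  - simpl. rewrite !C_n_0. replace (C 1 1) with 1 by (symmetry; apply C_n_n). ring.
  - rewrite tech5.
    rewrite (sum_eq (fun i => C (S (S m)) (S i) * g (S i))
                    (fun i => C (S m) i * g (S i) + C (S m) (S i) * g (S i))).
    2:{ intros i Hi. rewrite <- pascal by lia. ring. }
    rewrite plus_sum.
    rewrite (sum_eq (fun k => C (S m) k * (g k + g (S k)))
                    (fun k => C (S m) k * g k + C (S m) k * g (S k))) by (intros; ring).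
    rewrite plus_sum.
    rewrite (decomp_sum (fun k => C (S m) k * g k)) by lia. simpl pred.
    rewrite (tech5 (fun k => C (S m) k * g (S k))).
    rewrite !C_n_0, !C_n_n. ring.
Qed.

Lemma Ebin_ext n q f g : (forall k, (k <= n)%nat -> f k = g k) -> Ebin n q f = Ebin n q g.
Proof. intros H. unfold Ebin. apply sum_eq. intros i Hi. rewrite H by lia. ring. Qed.

Lemma Ebin_le n q f g : 0 <= q <= 1 -> (forall k, (k <= n)%nat -> f k <= g k) -> Ebin n q f <= Ebin n q g.
Proof. intros Hq H. unfold Ebin. apply sum_Rle. intros i Hi.
  apply Rmult_le_compat_l; [|apply H; lia].
  apply Rmult_le_pos; [apply Rmult_le_pos; [apply C_pos|]|]; apply pow_le; lra. Qed.

Lemma Ebin_S n q f : Ebin (S n) q f = q * Ebin n q (fun k => f (S k)) + (1 - q) * Ebin n q f.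
Proof.
  unfold Ebin.
  rewrite (sum_eq (fun k => C (S n) k * q ^ k * (1 - q) ^ (S n - k) * f k)
                  (fun k => C (S n) k * (q ^ k * (1 - q) ^ (S n - k) * f k))) by (intros; ring).
  rewrite sumC_S. rewrite !scal_sum. rewrite <- plus_sum. apply sum_eq. intros i Hi.
  replace (S n - i)%nat with (S (n - i)) by lia. simpl minus. simpl pow. ring.
Qed.

Lemma Ebin_quad n q a b c :
  Ebin n q (fun k => a + b * INR k + c * INR k ^ 2) =
  a + b * (INR n * q) + c * (INR n * q * (1 - q) + (INR n * q) ^ 2).
Proof.
  revert a b c. induction n as [|n IH]; intros a b c.
  - unfold Ebin. simpl. rewrite C_n_0. simpl. ring.
  - rewrite Ebin_S.
    rewrite (Ebin_ext n q (fun k => a + b * INR (S k) + c * INR (S k) ^ 2)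
              (fun k => (a + b + c) + (b + 2 * c) * INR k + c * INR k ^ 2)).
    2:{ intros k _. rewrite S_INR. ring. }
    rewrite !IH. rewrite S_INR. ring.
Qed.


Lemma ln_0' : ln 0 = 0.
Proof. cbv beta delta [ln]. destruct (Rlt_dec 0 0) as [h|h]; [exfalso; exact (Rlt_irrefl 0 h)|]. reflexivity. Qed.

Lemma ln_le' x y : 0 < x -> x <= y -> ln x <= ln y.
Proof. intros Hx Hxy. destruct (Req_dec x y). subst; lra. left; apply ln_increasing; lra. Qed.

Lemma ln_ge0 x : 1 <= x -> 0 <= ln x.
Proof. intros. rewrite <- ln_1. apply ln_le'; lra. Qed.

Lemma ln_div' x y : 0 < x -> 0 < y -> ln (x / y) = ln x - ln y.
Proof. intros Hx Hy. assert (ln x = ln (x / y * y)) as E by (f_equal; field; lra).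
  rewrite E, ln_mult. ring. apply Rdiv_lt_0_compat; lra. lra. Qed.

Lemma ln_le_sub1 x : 0 < x -> ln x <= x - 1.
Proof. intros Hx. pose proof (exp_ineq1_le (ln x)). rewrite exp_ln in H; lra. Qed.

Lemma ln_nat_ge0 k : 0 <= ln (INR k).
Proof. destruct k. simpl. rewrite ln_0'. lra. apply ln_ge0. rewrite S_INR. pose proof (pos_INR k). lra. Qed.

Lemma ln_up (k : nat) m : 1 <= m ->
  ln (INR k) <= ln m + (INR k - m) / m + ((INR k - m) / m) ^ 2.
Proof.
  intros Hm. pose proof (ln_ge0 m Hm).
  destruct k as [|k].
  - simpl INR. rewrite ln_0'. replace ((0 - m) / m) with (-1) by (field; lra). lra.
  - set (x := INR (S k)). assert (0 < x) by (unfold x; apply lt_0_INR; lia).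
    assert (ln x = ln m + ln (x / m)) as E by (rewrite ln_div'; lra).
    rewrite E. pose proof (ln_le_sub1 (x / m)).
    replace ((x - m) / m) with (x / m - 1) by (field; lra).
    assert (0 < x / m) by (apply Rdiv_lt_0_compat; lra).
    specialize (H1 H2). pose proof (pow2_ge_0 (x / m - 1)). lra.
Qed.

Lemma ln_lo (k : nat) m : 1 <= m ->
  ln m + (INR k - m) / m - (2 + 4 * ln m) * ((INR k - m) / m) ^ 2 <= ln (INR k).
Proof.
  intros Hm. pose proof (ln_ge0 m Hm). set (x := INR k). set (t := (x - m) / m).
  assert (0 <= x) by apply pos_INR.
  assert (Ht : x = m * (1 + t)) by (unfold t; field; lra).
  destruct (Rle_lt_dec m (2 * x)) as [Hc|Hc].
  - assert (0 < x) by lra.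
    assert (Ht2 : -1/2 <= t) by (unfold t; apply Rmult_le_reg_r with m; [lra|]; field_simplify; lra).
    assert (ln x = ln m - ln (m / x)) as E by (rewrite ln_div'; lra).
    rewrite E. pose proof (ln_le_sub1 (m / x)).
    assert (0 < m / x) by (apply Rdiv_lt_0_compat; lra).
    specialize (H2 H3).
    assert (m / x = 1 / (1 + t)) as E2 by (rewrite Ht; field; lra).
    rewrite E2 in H2.
    assert (t - 2 * t ^ 2 <= 1 - 1 / (1 + t)).
    { assert (1 - 1 / (1 + t) = t / (1 + t)) as E3 by (field; lra). rewrite E3.
      apply Rmult_le_reg_r with (1 + t). lra.
      replace (t / (1 + t) * (1 + t)) with t by (field; lra). nra. }
    rewrite E2. pose proof (pow2_ge_0 t).
    assert (0 <= 4 * ln m * t ^ 2) by (apply Rmult_le_pos; lra). lra.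
  - pose proof (ln_nat_ge0 k). fold x in H1.
    assert (t < -1/2) by (unfold t; apply Rmult_lt_reg_r with m; [lra|]; field_simplify; lra).
    assert (-1 <= t) by (unfold t; apply Rmult_le_reg_r with m; [lra|]; field_simplify; lra).
    assert (1/4 <= t ^ 2) by nra.
    assert ((2 + 4 * ln m) * (1/4) <= (2 + 4 * ln m) * t ^ 2) by (apply Rmult_le_compat_l; lra).
    lra.
Qed.

Definition Phi (g x : R) : R := exp (- g * ln (x + 1)).

Lemma Phi_pos g x : 0 < Phi g x.
Proof. apply exp_pos. Qed.

Lemma Phi_tangent g x m : 0 <= g -> 0 <= x -> 0 <= m ->
  Phi g m * (1 - g * (x - m) / (m + 1)) <= Phi g x.
Proof.
  intros Hg Hx Hm. unfold Phi.
  assert (ln (x + 1) = ln (m + 1) + ln ((x + 1) / (m + 1))) as E by (rewrite ln_div'; lra).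
  rewrite E. replace (- g * (ln (m + 1) + ln ((x + 1) / (m + 1)))) with
    (- g * ln (m + 1) + - g * ln ((x + 1) / (m + 1))) by ring.
  rewrite exp_plus. apply Rmult_le_compat_l. left; apply exp_pos.
  eapply Rle_trans; [|apply exp_ineq1_le].
  pose proof (ln_le_sub1 ((x + 1) / (m + 1))).
  assert (0 < (x + 1) / (m + 1)) by (apply Rdiv_lt_0_compat; lra).
  specialize (H H0).
  replace (g * (x - m) / (m + 1)) with (g * ((x + 1) / (m + 1) - 1)) by (field; lra).
  nra.
Qed.

Lemma Phi_ratio g y n s : 0 <= g -> 0 <= y -> 0 <= n -> 0 < s -> y + 1 <= s * (n + 1) ->
  Phi g n * (1 - g * ln s) <= Phi g y.
Proof.
  intros Hg Hy Hn Hs Hys. unfold Phi.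
  assert (ln (y + 1) = ln (n + 1) + ln ((y + 1) / (n + 1))) as E by (rewrite ln_div'; lra).
  rewrite E. replace (- g * (ln (n + 1) + ln ((y + 1) / (n + 1)))) with
    (- g * ln (n + 1) + - g * ln ((y + 1) / (n + 1))) by ring.
  rewrite exp_plus. apply Rmult_le_compat_l. left; apply exp_pos.
  eapply Rle_trans; [|apply exp_ineq1_le].
  assert (ln ((y + 1) / (n + 1)) <= ln s).
  { apply ln_le'. apply Rdiv_lt_0_compat; lra.
    apply Rmult_le_reg_r with (n + 1). lra. field_simplify; lra. }
  nra.
Qed.


Lemma Ebin_cent n q A B Cc :
  Ebin n q (fun k => A + B * (INR k - INR n * q) + Cc * (INR k - INR n * q) ^ 2) =
  A + Cc * (INR n * q * (1 - q)).
Proof.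
  set (x0 := INR n * q).
  rewrite (Ebin_ext n q _ (fun k => (A - B * x0 + Cc * x0 ^ 2) + (B - 2 * Cc * x0) * INR k + Cc * INR k ^ 2))
    by (intros; ring).
  rewrite Ebin_quad. unfold x0. ring.
Qed.


Lemma Eln_I_up (n : nat) (q : R) (Hq : 0 < q < 1) : 1 <= INR n * q ->
  Ebin n q (fun k => ln (INR k)) <= ln (INR n * q) + (1 - q) / (INR n * q).
Proof.
  intros Hm. set (m := INR n * q) in *.
  eapply Rle_trans.
  apply Ebin_le with (g := fun k => ln m + (1/m) * (INR k - INR n * q) + (1/m^2) * (INR k - INR n * q) ^ 2).
  lra. intros k _. fold m. pose proof (ln_up k m Hm).
  replace ((INR k - m) / m) with ((1/m) * (INR k - m)) in H by (field; lra).
  replace (((1/m) * (INR k - m)) ^ 2) with ((1/m^2) * (INR k - m) ^ 2) in H by (field; lra). exact H.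
  rewrite Ebin_cent. fold m. right. field. lra.
Qed.

Lemma Eln_I_lo (n : nat) (q : R) (Hq : 0 < q < 1) : 1 <= INR n * q ->
  ln (INR n * q) - (2 + 4 * ln (INR n * q)) * ((1 - q) / (INR n * q)) <= Ebin n q (fun k => ln (INR k)).
Proof.
  intros Hm. set (m := INR n * q) in *.
  eapply Rle_trans; [|
  apply Ebin_le with (f := fun k => ln m + (1/m) * (INR k - INR n * q) + (- (2 + 4 * ln m) /m^2) * (INR k - INR n * q) ^ 2)].
  rewrite Ebin_cent. fold m. right. field. lra.
  lra. intros k _. fold m. pose proof (ln_lo k m Hm).
  replace (ln m + 1 / m * (INR k - m) + - (2 + 4 * ln m) / m ^ 2 * (INR k - m) ^ 2)
   with (ln m + (INR k - m) / m - (2 + 4 * ln m) * ((INR k - m) / m) ^ 2) by (field; lra). exact H.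
Qed.

Lemma Eln_nI_up (n : nat) (q : R) (Hq : 0 < q < 1) : 1 <= INR n * (1 - q) ->
  Ebin n q (fun k => ln (INR (n - k))) <= ln (INR n * (1 - q)) + q / (INR n * (1 - q)).
Proof.
  intros Hm. set (m := INR n * (1 - q)) in *.
  eapply Rle_trans.
  apply Ebin_le with (g := fun k => ln m + (-1/m) * (INR k - INR n * q) + (1/m^2) * (INR k - INR n * q) ^ 2).
  lra. intros k Hk. fold m. pose proof (ln_up (n - k) m Hm).
  rewrite minus_INR in * by lia.
  replace (ln m + -1 / m * (INR k - INR n * q) + 1 / m ^ 2 * (INR k - INR n * q) ^ 2) with
   (ln m + (INR n - INR k - m) / m + ((INR n - INR k - m) / m) ^ 2) by (unfold m in *; field; repeat split; nra). exact H.
  rewrite Ebin_cent. fold m. right. unfold m in *. field. repeat split; nra.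
Qed.

Lemma Eln_nI_lo (n : nat) (q : R) (Hq : 0 < q < 1) : 1 <= INR n * (1 - q) ->
  ln (INR n * (1 - q)) - (2 + 4 * ln (INR n * (1 - q))) * (q / (INR n * (1 - q)))
    <= Ebin n q (fun k => ln (INR (n - k))).
Proof.
  intros Hm. set (m := INR n * (1 - q)) in *.
  eapply Rle_trans; [|
  apply Ebin_le with (f := fun k => ln m + (-1/m) * (INR k - INR n * q) + (- (2 + 4 * ln m) /m^2) * (INR k - INR n * q) ^ 2)].
  rewrite Ebin_cent. fold m. right. unfold m in *. field. repeat split; nra.
  lra. intros k Hk. fold m. pose proof (ln_lo (n - k) m Hm).
  rewrite minus_INR in * by lia.
  replace (ln m + -1 / m * (INR k - INR n * q) + - (2 + 4 * ln m) / m ^ 2 * (INR k - INR n * q) ^ 2)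
   with (ln m + (INR n - INR k - m) / m - (2 + 4 * ln m) * ((INR n - INR k - m) / m) ^ 2) by (unfold m in *; field; repeat split; nra). exact H.
Qed.

Lemma EPhi_I (n : nat) (q : R) (Hq : 0 < q < 1) g : 0 <= g -> Phi g (INR n * q) <= Ebin n q (fun k => Phi g (INR k)).
Proof.
  intros Hg. set (m := INR n * q). assert (0 <= m) by (unfold m; pose proof (pos_INR n); nra).
  eapply Rle_trans; [|apply Ebin_le with (f := fun k => Phi g m + (- Phi g m * g / (m + 1)) * (INR k - INR n * q) + 0 * (INR k - INR n * q) ^ 2)].
  rewrite Ebin_cent. lra. lra.
  intros k _. fold m. pose proof (Phi_tangent g (INR k) m Hg (pos_INR k) H).
  replace (Phi g m + - Phi g m * g / (m + 1) * (INR k - m) + 0 * (INR k - m) ^ 2) with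
    (Phi g m * (1 - g * (INR k - m) / (m + 1))) by (field; lra). exact H0.
Qed.

Lemma EPhi_nI (n : nat) (q : R) (Hq : 0 < q < 1) g : 0 <= g -> Phi g (INR n * (1 - q)) <= Ebin n q (fun k => Phi g (INR (n - k))).
Proof.
  intros Hg. set (m := INR n * (1 - q)). assert (0 <= m) by (unfold m; pose proof (pos_INR n); nra).
  eapply Rle_trans; [|apply Ebin_le with (f := fun k => Phi g m + (Phi g m * g / (m + 1)) * (INR k - INR n * q) + 0 * (INR k - INR n * q) ^ 2)].
  rewrite Ebin_cent. lra. lra.
  intros k Hk. fold m. pose proof (Phi_tangent g (INR (n - k)) m Hg (pos_INR _) H).
  rewrite minus_INR in * by lia.
  replace (Phi g m + Phi g m * g / (m + 1) * (INR k - INR n * q) + 0 * (INR k - INR n * q) ^ 2) with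
    (Phi g m * (1 - g * (INR n - INR k - m) / (m + 1))) by (unfold m in *; field; repeat split; nra). exact H0.
Qed.



Lemma exp_le' x y : x <= y -> exp x <= exp y.
Proof. intros H. destruct (Req_dec x y). subst; lra. left; apply exp_increasing; lra. Qed.

Lemma Ebin_1 n q : Ebin n q (fun _ => 1) = 1.
Proof. rewrite (Ebin_ext n q _ (fun k => 1 + 0 * INR k + 0 * INR k ^ 2)) by (intros; ring).
  rewrite Ebin_quad. ring. Qed.

Lemma Ebin_lin n q x y z f g :
  Ebin n q (fun k => x * f k + y * g k + z) = x * Ebin n q f + y * Ebin n q g + z.
Proof.
  pose proof (Ebin_1 n q) as H1. unfold Ebin in *. cbv beta in H1.
  rewrite (sum_eq _ (fun k => (C n k * q ^ k * (1 - q) ^ (n - k) * f k) * x +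
                              (C n k * q ^ k * (1 - q) ^ (n - k) * g k) * y +
                              (C n k * q ^ k * (1 - q) ^ (n - k) * 1) * z)) by (intros; ring).
  rewrite !plus_sum. rewrite <- !scal_sum. rewrite (sum_eq _ (fun k => C n k * q ^ k * (1 - q) ^ (n - k)) n) in H1 by (intros; ring). rewrite H1. ring.
Qed.

Lemma D_bound n q : 0 < q < 1 -> 1 <= INR n * q -> 1 <= INR n * (1 - q) ->
  Rabs (q * (Ebin n q (fun k => ln (INR k)) - ln (INR n * q)) +
        (1 - q) * (Ebin n q (fun k => ln (INR (n - k))) - ln (INR n * (1 - q))))
   <= 2 * (2 + 4 * ln (INR n)) / INR n.
Proof.
  intros Hq H1 H2.
  pose proof (Eln_I_up n q Hq H1). pose proof (Eln_I_lo n q Hq H1).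
  pose proof (Eln_nI_up n q Hq H2). pose proof (Eln_nI_lo n q Hq H2).
  assert (Hn : 1 <= INR n) by nra.
  assert (L1 : ln (INR n * q) <= ln (INR n)) by (apply ln_le'; nra).
  assert (L2 : ln (INR n * (1 - q)) <= ln (INR n)) by (apply ln_le'; nra).
  pose proof (ln_ge0 _ H1). pose proof (ln_ge0 _ H2).
  set (E1 := Ebin n q (fun k => ln (INR k))) in *.
  set (E2 := Ebin n q (fun k => ln (INR (n - k)))) in *.
  set (l := ln (INR n)) in *. set (l1 := ln (INR n * q)) in *. set (l2 := ln (INR n * (1 - q))) in *.
  assert (E : q * ((2 + 4 * l1) * ((1 - q) / (INR n * q))) = (2 + 4 * l1) * (1 - q) / INR n) by (field; lra).
  assert (E' : (1 - q) * ((2 + 4 * l2) * (q / (INR n * (1 - q)))) = (2 + 4 * l2) * q / INR n) by (field; lra).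
  assert (E3 : q * ((1 - q) / (INR n * q)) = (1 - q) / INR n) by (field; lra).
  assert (E4 : (1 - q) * (q / (INR n * (1 - q))) = q / INR n) by (field; lra).
  assert (Hin : 0 < / INR n) by (apply Rinv_0_lt_compat; lra).
  unfold Rdiv in *.
  apply Rabs_le. split.
  - assert (q * (E1 - l1) >= - ((2 + 4 * l1) * (1 - q) * / INR n)) by nra.
    assert ((1 - q) * (E2 - l2) >= - ((2 + 4 * l2) * q * / INR n)) by nra.
    assert ((2 + 4 * l1) * (1 - q) <= 2 + 4 * l) by nra.
    assert ((2 + 4 * l2) * q <= 2 + 4 * l) by nra.
    nra.
  - assert (q * (E1 - l1) <= (1 - q) * / INR n) by nra.
    assert ((1 - q) * (E2 - l2) <= q * / INR n) by nra.
    assert (0 <= l) by lra. nra.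
Qed.

Lemma Phi_sum n q g s : 0 <= g -> 0 < s -> 0 < q < 1 ->
  INR n * q + 1 <= s * (INR n + 1) -> INR n * (1 - q) + 1 <= s * (INR n + 1) ->
  Phi g (INR n) * (1 - g * ln s) <=
  q * Ebin n q (fun k => Phi g (INR k)) + (1 - q) * Ebin n q (fun k => Phi g (INR (n - k))).
Proof.
  intros Hg Hs Hq H1 H2. pose proof (pos_INR n).
  pose proof (EPhi_I n q Hq g Hg). pose proof (EPhi_nI n q Hq g Hg).
  pose proof (Phi_ratio g (INR n * q) (INR n) s Hg ltac:(nra) H Hs H1).
  pose proof (Phi_ratio g (INR n * (1 - q)) (INR n) s Hg ltac:(nra) H Hs H2).
  nra.
Qed.

Lemma sqrt_exp n : 0 <= n -> exp (1/2 * ln (n + 1)) * exp (1/2 * ln (n + 1)) = n + 1.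
Proof. intros. rewrite <- exp_plus. replace (1/2 * ln (n+1) + 1/2 * ln (n+1)) with (ln (n+1)) by field.
  apply exp_ln. lra. Qed.

Lemma D_Phi n g : 0 < g <= 1/2 -> 1 <= n -> 2 * (2 + 4 * ln n) / n <= 40 * Phi g n.
Proof.
  intros Hg Hn. set (u := exp (1/2 * ln (n + 1))).
  assert (Hu2 : u * u = n + 1) by (apply sqrt_exp; lra).
  assert (Hl0 : 0 <= ln (n + 1)) by (apply ln_ge0; lra).
  assert (Hu1 : exp 0 <= u) by (unfold u; apply exp_le'; nra). rewrite exp_0 in Hu1.
  assert (Hlu : ln (n + 1) = 2 * ln u) by (unfold u; rewrite ln_exp; field).
  assert (ln u <= u - 1) by (apply ln_le_sub1; lra).
  assert (ln n <= ln (n + 1)) by (apply ln_le'; lra).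
  assert (Phi g n >= / u).
  { unfold Phi, u. rewrite <- exp_Ropp. apply Rle_ge, exp_le'. nra. }
  assert (0 < u) by lra.
  apply Rmult_le_reg_r with (n * u). nra.
  replace (2 * (2 + 4 * ln n) / n * (n * u)) with (2 * (2 + 4 * ln n) * u) by (field; lra).
  assert (40 * Phi g n * (n * u) >= 40 * n) by
    (assert (Phi g n * u >= 1) by (apply Rle_ge; apply Rmult_le_reg_r with (/ u);
        [apply Rinv_0_lt_compat; lra| replace (Phi g n * u * / u) with (Phi g n) by (field; lra); lra]); nra).
  nra.
Qed.

Lemma eps_Phi n a g : 2 <= n -> 0 < g <= a / 2 -> exp (- a * ln n) <= Phi g n.
Proof.
  intros Hn Hg. unfold Phi. apply exp_le'.
  assert (ln (n + 1) <= 2 * ln n).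
  { replace (2 * ln n) with (ln (n * n)) by (rewrite ln_mult; lra). apply ln_le'; nra. }
  assert (0 <= ln (n + 1)) by (apply ln_ge0; lra).
  nra.
Qed.


Lemma fin_max (f : nat -> nat -> R) (N : nat) :
  exists A, forall j n, (j <= 1)%nat -> (n < N)%nat -> f j n <= A.
Proof.
  induction N as [|N [A HA]].
  - exists 0. intros; lia.
  - exists (Rmax A (Rmax (f 0%nat N) (f 1%nat N))). intros j n Hj Hn.
    destruct (Nat.eq_dec n N) as [->|Hne].
    + destruct j as [|[|j]]; [| |lia].
      * eapply Rle_trans; [|apply Rmax_r]. apply Rmax_l.
      * eapply Rle_trans; [|apply Rmax_r]. apply Rmax_r.
    + eapply Rle_trans; [|apply Rmax_l]. apply HA; lia.
Qed.

Lemma contract_step n q (e0 e1 : nat -> R) ei M :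
  0 < q < 1 -> (0 < n)%nat -> 0 <= M ->
  (forall k, (k < n)%nat -> e0 k <= 0) -> (forall k, (k < n)%nat -> e1 k <= 0) ->
  e0 n <= M -> e1 n <= M ->
  ei <= q * Ebin n q e0 + (1 - q) * Ebin n q (fun k => e1 (n - k)%nat) ->
  ei <= M * (q ^ 2 + (1 - q) ^ 2).
Proof.
  intros Hq Hn HM H0 H1 H0n H1n Hi.
  assert (Hn' : 0 < INR n) by (apply lt_0_INR; lia).
  assert (A0 : Ebin n q e0 <= M * q).
  { eapply Rle_trans. apply Ebin_le with (g := fun k => 0 + (M / INR n) * INR k + 0 * INR k ^ 2). lra.
    intros k Hk. destruct (Nat.eq_dec k n) as [->|Hne].
    - replace (0 + M / INR n * INR n + 0 * INR n ^ 2) with M by (field; lra). auto.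
    - pose proof (H0 k ltac:(lia)). pose proof (pos_INR k).
      assert (0 <= M / INR n * INR k) by (apply Rmult_le_pos; [apply Rmult_le_pos; [lra|left; apply Rinv_0_lt_compat; lra]|]; lra). lra.
    - rewrite Ebin_quad. right. field. lra. }
  assert (A1 : Ebin n q (fun k => e1 (n - k)%nat) <= M * (1 - q)).
  { eapply Rle_trans. apply Ebin_le with (g := fun k => M + (- M / INR n) * INR k + 0 * INR k ^ 2). lra.
    intros k Hk. destruct (Nat.eq_dec k 0) as [->|Hne].
    - rewrite Nat.sub_0_r. simpl INR. lra.
    - pose proof (H1 (n - k)%nat ltac:(lia)).
      assert (INR k <= INR n) by (apply le_INR; lia).
      assert (M / INR n * INR k <= M).
      { replace M with (M / INR n * INR n) at 2 by (field; lra). apply Rmult_le_compat_l.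
        apply Rmult_le_pos; [lra|left; apply Rinv_0_lt_compat; lra]. lra. }
      replace (M + - M / INR n * INR k + 0 * INR k ^ 2) with (M - M / INR n * INR k) by (field; lra). lra.
    - rewrite Ebin_quad. right. field. lra. }
  nra.
Qed.


Lemma ln_lt0 x : 0 < x < 1 -> ln x < 0.
Proof. intros. rewrite <- ln_1. apply ln_increasing; lra. Qed.

Lemma upper (p : nat -> nat -> R) (a eps : nat -> nat -> R) (c : nat -> R) (alpha : R) :
  (forall i j : nat, (i <= 1)%nat -> (j <= 1)%nat -> 0 < p i j < 1) ->
  (forall i : nat, (i <= 1)%nat -> p i 0%nat + p i 1%nat = 1) ->
  (forall i n : nat, (i <= 1)%nat -> (1 <= n)%nat ->
     a i n = p i 0%nat * Ebin n (p i 0%nat) (fun k => a 0%nat k)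
           + p i 1%nat * Ebin n (p i 0%nat) (fun k => a 1%nat (n - k)%nat)
           + eps i n) ->
  0 < alpha ->
  (forall i : nat, (i <= 1)%nat ->
     exists M : R, exists N : nat, forall n : nat, (N <= n)%nat ->
       Rabs (eps i n - c i) <= M * Rpower (INR n) (- alpha)) ->
  exists A, forall i : nat, (i <= 1)%nat -> forall n : nat,
    a i n <= (pi0 p * c 0%nat + pi1 p * c 1%nat) / Hent p * ln (INR n) + A.
Proof.
  intros Hp Hsum Hrec Ha Heps.
  set (L := (pi0 p * c 0%nat + pi1 p * c 1%nat) / Hent p).
  pose proof (Hp 0%nat 0%nat ltac:(lia) ltac:(lia)) as P00.
  pose proof (Hp 0%nat 1%nat ltac:(lia) ltac:(lia)) as P01.
  pose proof (Hp 1%nat 0%nat ltac:(lia) ltac:(lia)) as P10.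
  pose proof (Hp 1%nat 1%nat ltac:(lia) ltac:(lia)) as P11.
  pose proof (Hsum 0%nat ltac:(lia)) as S0. pose proof (Hsum 1%nat ltac:(lia)) as S1.
  assert (HR0 : 0 < Hrow p 0%nat).
  { unfold Hrow. pose proof (ln_lt0 _ P00). pose proof (ln_lt0 _ P01).
    assert (p 0%nat 0%nat * ln (p 0%nat 0%nat) < 0) by (apply Rmult_pos_neg; lra).
    assert (p 0%nat 1%nat * ln (p 0%nat 1%nat) < 0) by (apply Rmult_pos_neg; lra). lra. }
  assert (HR1 : 0 < Hrow p 1%nat).
  { unfold Hrow. pose proof (ln_lt0 _ P10). pose proof (ln_lt0 _ P11).
    assert (p 1%nat 0%nat * ln (p 1%nat 0%nat) < 0) by (apply Rmult_pos_neg; lra).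
    assert (p 1%nat 1%nat * ln (p 1%nat 1%nat) < 0) by (apply Rmult_pos_neg; lra). lra. }
  set (H0 := Hrow p 0%nat) in *. set (H1 := Hrow p 1%nat) in *.
  assert (HL : L * (p 1%nat 0%nat * H0 + p 0%nat 1%nat * H1) = p 1%nat 0%nat * c 0%nat + p 0%nat 1%nat * c 1%nat).
  { unfold L, Hent, pi0, pi1. fold H0 H1. field.
    split; [lra|]. apply Rgt_not_eq.
    pose proof (Rmult_lt_0_compat _ _ (proj1 P10) HR0). pose proof (Rmult_lt_0_compat _ _ (proj1 P01) HR1). lra. }
  set (h0 := (c 0%nat - L * H0) / p 0%nat 1%nat).
  set (h := fun i : nat => match i with O => h0 | _ => 0 end).
  assert (Hh : forall i, (i <= 1)%nat -> p i 0%nat * h 0%nat + p i 1%nat * h 1%nat - h i = L * Hrow p i - c i).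
  { intros i Hi. destruct i as [|[|i]]; [| |lia]; simpl h.
    - replace (p 0%nat 0%nat) with (1 - p 0%nat 1%nat) by lra. unfold h0. change (Hrow p 0%nat) with H0.
      field. lra.
    - change (Hrow p 1%nat) with H1.
      assert (E : p 1%nat 0%nat * (c 0%nat - L * H0) = p 0%nat 1%nat * (L * H1 - c 1%nat)) by lra.
      unfold h0. replace (p 1%nat 0%nat * ((c 0%nat - L * H0) / p 0%nat 1%nat)) with
        (p 1%nat 0%nat * (c 0%nat - L * H0) / p 0%nat 1%nat) by (field; lra).
      rewrite E. field. lra. }
  destruct (Heps 0%nat ltac:(lia)) as [M0 [Ne0 HE0]].
  destruct (Heps 1%nat ltac:(lia)) as [M1 [Ne1 HE1]].
  set (K := Rabs M0 + Rabs M1).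
  assert (HK0 : 0 <= K) by (unfold K; pose proof (Rabs_pos M0); pose proof (Rabs_pos M1); lra).
  assert (HK : forall i n, (i <= 1)%nat -> (Nat.max Ne0 Ne1 <= n)%nat ->
             eps i n - c i <= K * exp (- alpha * ln (INR n))).
  { intros i n Hi Hn. pose proof (exp_pos (- alpha * ln (INR n))).
    destruct i as [|[|i]]; [| |lia].
    - specialize (HE0 n ltac:(lia)). unfold Rpower in HE0.
      pose proof (Rle_abs (eps 0%nat n - c 0%nat)). pose proof (Rle_abs M0). pose proof (Rabs_pos M1).
      unfold K. nra.
    - specialize (HE1 n ltac:(lia)). unfold Rpower in HE1.
      pose proof (Rle_abs (eps 1%nat n - c 1%nat)). pose proof (Rle_abs M1). pose proof (Rabs_pos M0).
      unfold K. nra. }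
  set (g := Rmin (alpha / 2) (1 / 2)).
  assert (Hg : 0 < g <= alpha / 2 /\ g <= 1/2).
  { unfold g. split; [split|]. apply Rmin_glb_lt; lra. apply Rmin_l. apply Rmin_r. }
  set (qmax := Rmax (Rmax (p 0%nat 0%nat) (p 0%nat 1%nat)) (Rmax (p 1%nat 0%nat) (p 1%nat 1%nat))).
  assert (Hqmax : qmax < 1) by (unfold qmax; repeat apply Rmax_lub_lt; lra).
  assert (Hqm : forall i j, (i <= 1)%nat -> (j <= 1)%nat -> p i j <= qmax).
  { intros i j Hi Hj. unfold qmax.
    destruct i as [|[|i]]; [| |lia]; destruct j as [|[|j]]; try lia.
    - eapply Rle_trans; [|apply Rmax_l]. apply Rmax_l.
    - eapply Rle_trans; [|apply Rmax_l]. apply Rmax_r.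
    - eapply Rle_trans; [|apply Rmax_r]. apply Rmax_l.
    - eapply Rle_trans; [|apply Rmax_r]. apply Rmax_r. }
  assert (Hqmax0 : 0 < qmax) by (pose proof (Hqm 0%nat 0%nat ltac:(lia) ltac:(lia)); lra).
  set (s := (1 + qmax) / 2).
  assert (Hs : 0 < s < 1) by (unfold s; lra).
  assert (Hlns : ln s < 0) by (apply ln_lt0; lra).
  set (delta := - g * ln s).
  assert (Hd : 0 < delta) by (unfold delta; nra).
  set (qmin := Rmin (Rmin (p 0%nat 0%nat) (p 0%nat 1%nat)) (Rmin (p 1%nat 0%nat) (p 1%nat 1%nat))).
  assert (Hqmin : 0 < qmin) by (unfold qmin; repeat apply Rmin_glb_lt; lra).
  assert (Hqmi : forall i j, (i <= 1)%nat -> (j <= 1)%nat -> qmin <= p i j).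
  { intros i j Hi Hj. unfold qmin.
    destruct i as [|[|i]]; [| |lia]; destruct j as [|[|j]]; try lia.
    - eapply Rle_trans; [apply Rmin_l|]. apply Rmin_l.
    - eapply Rle_trans; [apply Rmin_l|]. apply Rmin_r.
    - eapply Rle_trans; [apply Rmin_r|]. apply Rmin_l.
    - eapply Rle_trans; [apply Rmin_r|]. apply Rmin_r. }
  destruct (INR_unbounded (/ qmin)) as [n1 Hn1].
  set (N0 := Nat.max (Nat.max Ne0 Ne1) (Nat.max 3 n1)).
  set (B := (40 * Rabs L + K) / delta).
  assert (HB : B * delta = 40 * Rabs L + K) by (unfold B; field; lra).
  assert (HB0 : 0 <= B) by (unfold B; apply Rmult_le_pos; [pose proof (Rabs_pos L); lra | left; apply Rinv_0_lt_compat; lra]).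
  destruct (fin_max (fun j n => a j n - (L * ln (INR n) + h j - B * Phi g (INR n))) N0) as [A HA].
  set (U := fun j n => L * ln (INR n) + h j + A - B * Phi g (INR n)).
  assert (Super : forall i n, (i <= 1)%nat -> (N0 <= n)%nat ->
    p i 0%nat * Ebin n (p i 0%nat) (fun k => U 0%nat k) + p i 1%nat * Ebin n (p i 0%nat) (fun k => U 1%nat (n - k)%nat)
      + eps i n <= U i n).
  { intros i n Hi Hn.
    assert (Hnn1 : INR n1 <= INR n) by (apply le_INR; unfold N0 in Hn; lia).
    assert (Hn3 : 3 <= INR n) by (replace 3 with (INR 3) by (simpl; ring); apply le_INR; unfold N0 in Hn; lia).
    assert (Hnq : forall j, (j <= 1)%nat -> 1 <= INR n * p i j).
    { intros j Hj. pose proof (Hqmi i j Hi Hj).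
      assert (/ qmin * qmin = 1) by (field; lra).
      assert (INR n * qmin <= INR n * p i j) by (apply Rmult_le_compat_l; lra).
      nra. }
    pose proof (Hnq 0%nat ltac:(lia)) as Hnq0. pose proof (Hnq 1%nat ltac:(lia)) as Hnq1.
    pose proof (Hqm i 0%nat Hi ltac:(lia)) as Hqm0. pose proof (Hqm i 1%nat Hi ltac:(lia)) as Hqm1.
    pose proof (Hp i 0%nat Hi ltac:(lia)) as Hq. pose proof (Hp i 1%nat Hi ltac:(lia)) as Hq'.
    pose proof (Hsum i Hi) as Si. pose proof (Hh i Hi) as Hhi.
    assert (Hb : p i 0%nat * ln (INR n * p i 0%nat) + p i 1%nat * ln (INR n * p i 1%nat) = ln (INR n) - Hrow p i).
    { unfold Hrow. rewrite !ln_mult by lra. replace (p i 1%nat) with (1 - p i 0%nat) by lra. ring. }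
    replace (p i 1%nat) with (1 - p i 0%nat) in * by lra.
    set (q := p i 0%nat) in *.
    rewrite (Ebin_ext n q (fun k => U 0%nat k)
       (fun k => L * ln (INR k) + (- B) * Phi g (INR k) + (h 0%nat + A))) by (intros; unfold U; ring).
    rewrite (Ebin_ext n q (fun k => U 1%nat (n - k)%nat)
       (fun k => L * ln (INR (n - k)) + (- B) * Phi g (INR (n - k)) + (h 1%nat + A))) by (intros; unfold U; ring).
    rewrite !Ebin_lin.
    pose proof (D_bound n q Hq Hnq0 Hnq1) as HD.
    pose proof (Phi_sum n q g s ltac:(lra) ltac:(lra) Hq ltac:(unfold s; nra) ltac:(unfold s; nra)) as HPS.
    pose proof (HK i n Hi ltac:(unfold N0 in Hn; lia)) as HKi.
    pose proof (eps_Phi (INR n) alpha g ltac:(lra) ltac:(lra)) as HeP.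
    pose proof (D_Phi (INR n) g ltac:(lra) ltac:(lra)) as HDP.
    set (E1 := Ebin n q (fun k => ln (INR k))) in *.
    set (E2 := Ebin n q (fun k => ln (INR (n - k)))) in *.
    set (F1 := Ebin n q (fun k => Phi g (INR k))) in *.
    set (F2 := Ebin n q (fun k => Phi g (INR (n - k)))) in *.
    set (Dp := q * (E1 - ln (INR n * q)) + (1 - q) * (E2 - ln (INR n * (1 - q)))) in *.
    set (Pn := Phi g (INR n)) in *.
    assert (X1 : L * Dp <= Rabs L * (40 * Pn)).
    { eapply Rle_trans. apply Rle_abs. rewrite Rabs_mult. apply Rmult_le_compat_l. apply Rabs_pos. lra. }
    assert (X2 : B * (Pn * (1 - g * ln s)) <= B * (q * F1 + (1 - q) * F2)) by (apply Rmult_le_compat_l; lra).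
    assert (X3 : B * (Pn * (1 - g * ln s)) = B * Pn + (40 * Rabs L + K) * Pn).
    { rewrite <- HB. unfold delta. ring. }
    assert (X4 : K * exp (- alpha * ln (INR n)) <= K * Pn) by (apply Rmult_le_compat_l; lra).
    unfold U. unfold Dp in X1.
    assert (X5 : L * (q * E1 + (1 - q) * E2) = L * (q * (E1 - ln (INR n * q)) + (1 - q) * (E2 - ln (INR n * (1 - q)))) + L * (ln (INR n) - Hrow p i)) by (rewrite <- Hb; ring).
    fold Pn. lra. }
  assert (Main : forall n j, (j <= 1)%nat -> a j n <= U j n).
  { intro n. pattern n. apply Wf_nat.lt_wf_ind. clear n. intros n IH.
    destruct (Compare_dec.lt_dec n N0) as [Hlt|Hge].
    - intros j Hj. specialize (HA j n Hj Hlt). unfold U. lra.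
    - assert (HnN : (N0 <= n)%nat) by lia.
      set (M := Rmax (Rmax (a 0%nat n - U 0%nat n) (a 1%nat n - U 1%nat n)) 0).
      assert (HM0 : 0 <= M) by apply Rmax_r.
      assert (HMa : a 0%nat n - U 0%nat n <= M) by (eapply Rle_trans; [|apply Rmax_l]; apply Rmax_l).
      assert (HMb : a 1%nat n - U 1%nat n <= M) by (eapply Rle_trans; [|apply Rmax_l]; apply Rmax_r).
      assert (Step : forall i, (i <= 1)%nat -> a i n - U i n <= M * (p i 0%nat ^ 2 + (1 - p i 0%nat) ^ 2)).
      { intros i Hi.
        pose proof (Hp i 0%nat Hi ltac:(lia)) as Hq. pose proof (Hsum i Hi) as Si.
        apply contract_step with (n := n) (e0 := fun k => a 0%nat k - U 0%nat k) (e1 := fun k => a 1%nat k - U 1%nat k); auto.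
        + unfold N0 in HnN; lia.
        + intros k Hk. pose proof (IH k Hk 0%nat ltac:(lia)). lra.
        + intros k Hk. pose proof (IH k Hk 1%nat ltac:(lia)). lra.
        + pose proof (Hrec i n Hi ltac:(unfold N0 in HnN; lia)) as R.
          pose proof (Super i n Hi HnN) as Sp.
          rewrite (Ebin_ext n (p i 0%nat) (fun k => a 0%nat k - U 0%nat k)
            (fun k => 1 * a 0%nat k + (-1) * U 0%nat k + 0)) by (intros; ring).
          rewrite (Ebin_ext n (p i 0%nat) (fun k => a 1%nat (n - k)%nat - U 1%nat (n - k)%nat)
            (fun k => 1 * a 1%nat (n - k)%nat + (-1) * U 1%nat (n - k)%nat + 0)) by (intros; ring).
          rewrite !Ebin_lin.
          replace (p i 1%nat) with (1 - p i 0%nat) in R, Sp by lra.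
          change (fun k : nat => a 0%nat k) with (a 0%nat) in R. change (fun k : nat => U 0%nat k) with (U 0%nat) in Sp. lra. }
      pose proof (Step 0%nat ltac:(lia)) as St0. pose proof (Step 1%nat ltac:(lia)) as St1.
      assert (W0 : p 0%nat 0%nat ^ 2 + (1 - p 0%nat 0%nat) ^ 2 < 1) by nra.
      assert (W1 : p 1%nat 0%nat ^ 2 + (1 - p 1%nat 0%nat) ^ 2 < 1) by nra.
      assert (HMle : M <= 0).
      { destruct (Rle_dec M 0) as [|HMp]; [assumption|]. exfalso.
        assert (M < M); [|lra].
        assert (Mdef : M = Rmax (Rmax (a 0%nat n - U 0%nat n) (a 1%nat n - U 1%nat n)) 0) by reflexivity.
        rewrite Mdef at 1. apply Rmax_lub_lt; [apply Rmax_lub_lt|]; nra. }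
      intros j Hj. pose proof (Step j Hj).
      assert (0 <= p j 0%nat ^ 2 + (1 - p j 0%nat) ^ 2) by nra.
      assert (M * (p j 0%nat ^ 2 + (1 - p j 0%nat) ^ 2) <= 0) by nra. lra. }
  exists (A + Rabs h0). intros i Hi n. pose proof (Main n i Hi) as Mn. unfold U in Mn.
  assert (0 <= B * Phi g (INR n)) by (apply Rmult_le_pos; [lra|left; apply Phi_pos]).
  assert (h i <= Rabs h0).
  { destruct i as [|[|i]]; [| |lia]; simpl h. apply Rle_abs. apply Rabs_pos. }
  fold L. lra.
Qed.


Theorem lemma4p4
  (p : nat -> nat -> R) (a eps : nat -> nat -> R) (c : nat -> R) (alpha : R) :
  (* transition matrix with all entries in (0,1) *)
  (forall i j : nat, (i <= 1)%nat -> (j <= 1)%nat -> 0 < p i j < 1) ->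
  (forall i : nat, (i <= 1)%nat -> p i 0%nat + p i 1%nat = 1) ->
  (* some entry differs from 1/2 *)
  (exists i j : nat, (i <= 1)%nat /\ (j <= 1)%nat /\ p i j <> / 2) ->
  (* the recurrence, for n >= 1, I_n^i ~ B(n, p_{i0}) *)
  (forall i n : nat, (i <= 1)%nat -> (1 <= n)%nat ->
     a i n = p i 0%nat * Ebin n (p i 0%nat) (fun k => a 0%nat k)
           + p i 1%nat * Ebin n (p i 0%nat) (fun k => a 1%nat (n - k)%nat)
           + eps i n) ->
  (* eps_i(n) = c_i + O(n^{-alpha}) *)
  0 < alpha ->
  (forall i : nat, (i <= 1)%nat ->
     exists M : R, exists N : nat, forall n : nat, (N <= n)%nat ->
       Rabs (eps i n - c i) <= M * Rpower (INR n) (- alpha)) ->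
  (* conclusion: a_i(n) = (pi0 c0 + pi1 c1)/H log n + O(1) *)
  forall i : nat, (i <= 1)%nat ->
    exists M : R, exists N : nat, forall n : nat, (N <= n)%nat ->
      Rabs (a i n - (pi0 p * c 0%nat + pi1 p * c 1%nat) / Hent p * ln (INR n)) <= M.
Proof.
  intros Hp Hsum _ Hrec Ha Heps i Hi.
  destruct (upper p a eps c alpha Hp Hsum Hrec Ha Heps) as [A1 H1].
  destruct (upper p (fun j n => - a j n) (fun j n => - eps j n) (fun j => - c j) alpha Hp Hsum) as [A2 H2].
  - intros j n Hj Hn. rewrite (Hrec j n Hj Hn).
    rewrite (Ebin_ext n (p j 0%nat) (fun k => - a 0%nat k) (fun k => (-1) * a 0%nat k + 0 * a 0%nat k + 0)) by (intros; ring).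
    rewrite (Ebin_ext n (p j 0%nat) (fun k => - a 1%nat (n - k)%nat)
       (fun k => (-1) * a 1%nat (n - k)%nat + 0 * a 1%nat (n - k)%nat + 0)) by (intros; ring).
    rewrite !Ebin_lin. change (fun k : nat => a 0%nat k) with (a 0%nat). ring.
  - exact Ha.
  - intros j Hj. destruct (Heps j Hj) as [M [N HN]]. exists M, N. intros n Hn.
    replace (- eps j n - - c j) with (- (eps j n - c j)) by ring. rewrite Rabs_Ropp. auto.
  - exists (Rmax A1 A2), 0%nat. intros n _.
    specialize (H1 i Hi n). specialize (H2 i Hi n). cbv beta in H2.
    assert (E : (pi0 p * - c 0%nat + pi1 p * - c 1%nat) / Hent p = - ((pi0 p * c 0%nat + pi1 p * c 1%nat) / Hent p))
      by (unfold Rdiv; ring).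
    rewrite E in H2. pose proof (Rmax_l A1 A2). pose proof (Rmax_r A1 A2).
    apply Rabs_le. lra.
Qed.
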